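(* Let $\mathbb{F}$ be a finite field and $n\ge2$. The isolated subsemigroups of $M(n,\mathbb{F})$ are exactly: $M(n,\mathbb{F})$, $\mathrm{GL}(n,\mathbb{F})$, $I_{n-1}$, and all semigroups $S(\mathcal{A},\mathcal{B})=\{A\in M(n,\mathbb{F}) : \mathrm{Im}(A)\in\mathcal{A},\ \ker(A)\in\mathcal{B}\}$, where $\mathcal{A}$ is a nonempty set of $(n-1)$-dimensional subspaces of $\mathbb{F}^n$ and $\mathcal{B}$ is a nonempty set of $1$-dimensional subspaces of $\mathbb{F}^n$ such that $V_1\not\subseteq V_2$ for every $V_1\in\mathcal{B}$ and every $V_2\in\mathcal{A}$.
   Context: $M(n,\mathbb{F})$ is the semigroup of $n\times n$ matrices over $\mathbb{F}$ under multiplication, identified with linear operators on $\mathbb{F}^n$; $\mathrm{GL}(n,\mathbb{F})$ is its group of units; $I_{n-1}$ is the set of all matrices of rank at most $n-1$. A (nonempty) subsemigroup $T$ of a semigroup $S$ is isolated if for all $x\in S$ and positive integers $m$, $x^m\in T$ implies $x\in T$. *)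

(* Defs.v *)
From HB Require Import structures.
From mathcomp Require Import all_boot all_algebra.
Set Implicit Arguments. Unset Strict Implicit. Unset Printing Implicit Defensive.
Import GRing.Theory.
Local Open Scope ring_scope.

(* Matrices A : 'M[F]_n act on column vectors v : 'cV_n by v |-> A *m v,
   so the matrix product is composition of operators.  Subspaces of F^n are
   represented (up to %MS row-space equality) by square matrices whose row
   space, read as transposed column vectors, is the subspace. *)

Definition mx_im (F : fieldType) (n : nat) (A : 'M[F]_n) : 'M[F]_n := A^T.
(* ker(A): {v | A v = 0}, i.e. the rows u with u *m A^T = 0. *)
Definition mx_ker (F : fieldType) (n : nat) (A : 'M[F]_n) : 'M[F]_n := kermx A^T.

Definition is_subsemigroup (F : finFieldType) (n : nat) (T : {set 'M[F]_n}) : Prop :=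
  T != set0 /\ (forall A B, A \in T -> B \in T -> A *m B \in T).

Definition is_isolated (F : finFieldType) (n : nat) (T : {set 'M[F]_n}) : Prop :=
  forall (x : 'M[F]_n) (m : nat), (0 < m)%N -> x ^+ m \in T -> x \in T.

Definition isolated_subsemigroup (F : finFieldType) (n : nat) (T : {set 'M[F]_n}) : Prop :=
  is_subsemigroup T /\ is_isolated T.

Definition GLset (F : finFieldType) (n : nat) : {set 'M[F]_n} :=
  [set A | A \in unitmx].

Definition I_rank_le (F : finFieldType) (n : nat) (k : nat) : {set 'M[F]_n} :=
  [set A | (\rank A <= k)%N].

Definition S_AB (F : finFieldType) (n : nat) (calA calB : {set 'M[F]_n}) : {set 'M[F]_n} :=
  [set A | [exists V in calA, (mx_im A == V)%MS] && [exists W in calB, (mx_ker A == W)%MS]].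

(* Main.v *)
Require Import Defs.
From HB Require Import structures.
From mathcomp Require Import all_boot all_algebra.
Set Implicit Arguments. Unset Strict Implicit. Unset Printing Implicit Defensive.
Import GRing.Theory.
Local Open Scope ring_scope.

Section S.
Variable (F : finFieldType) (m : nat).
Local Notation n := m.+1.
Local Notation M := 'M[F]_n.
Implicit Types (T : {set M}) (x y z e : M).

Definition closedT T := forall A B, A \in T -> B \in T -> A *m B \in T.
Definition isoT T := forall x (k : nat), (0 < k)%N -> x ^+ k \in T -> x \in T.

Lemma closed_pow T x k : closedT T -> x \in T -> (0 < k)%N -> x ^+ k \in T.
Proof.
move=> cT xT; elim: k => // [[|k]] IH _; first by rewrite expr1.
by rewrite exprS; apply: cT => //; apply: IH.
Qed.

Lemma pow_shift x i d t : x ^+ i = x ^+ (i + d) -> (i <= t)%N -> x ^+ (t + d) = x ^+ t.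
Proof.
move=> h le; by rewrite -(subnK le) -addnA !(exprD _ (t - i)) -h.
Qed.

Lemma pow_period x i d t c : x ^+ i = x ^+ (i + d) -> (i <= t)%N ->
  x ^+ (t + c * d) = x ^+ t.
Proof.
move=> h le; elim: c => [|c IH]; first by rewrite mul0n addn0.
rewrite mulSn (addnC d) addnA (pow_shift h) ?IH //.
exact: leq_trans le (leq_addr _ _).
Qed.

Lemma idem_pow x : exists k, (0 < k)%N /\ x ^+ k * x ^+ k = x ^+ k.
Proof.
pose f (i : 'I_(#|{: M}|.+1)) := x ^+ i.
have : ~~ [forall i, forall j, (f i == f j) ==> (i == j)].
  apply/negP => /forallP h.
  have inj : injective f.
    by move=> a b e; apply/eqP; apply: (implyP (forallP (h a) b)); apply/eqP.
  by have := leq_card _ inj; rewrite card_ord ltnn.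
case/forallPn => i /forallPn [j]; rewrite negb_imply => /andP [/eqP e ne].
have [i0 [d [d0 h]]] : exists i0 d, (0 < d)%N /\ x ^+ i0 = x ^+ (i0 + d).
  case: (ltngtP i j) => [lt|lt|eq].
  - exists i, (j - i)%N; rewrite subn_gt0 lt subnKC 1?ltnW //.
  - exists j, (i - j)%N; rewrite subn_gt0 lt subnKC 1?ltnW //.
  - by move: ne; rewrite (val_inj eq) eqxx.
exists (i0.+1 * d)%N; split; first by rewrite muln_gt0.
rewrite -exprD (@pow_period x i0 d _ i0.+1 h) //.
by apply: leq_trans (leq_pmulr _ d0); apply: leqnSn.
Qed.

Lemma iso_idem T x : closedT T -> isoT T ->
  exists k, [/\ (0 < k)%N, x ^+ k * x ^+ k = x ^+ k & (x ^+ k \in T) = (x \in T)].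
Proof.
move=> cT iT; have [k [k0 h]] := idem_pow x; exists k; split => //.
apply/idP/idP => [/(iT _ _ k0) //|xT]; exact: closed_pow.
Qed.

Lemma rank_pow x k : (0 < k)%N -> (\rank (x ^+ k) <= \rank x)%N.
Proof.
by case: k => // k _; rewrite exprSr mxrankM_maxr.
Qed.

Lemma trmxX x k : (x ^+ k)^T = (x^T) ^+ k.
Proof.
elim: k => [|k IH]; first by rewrite !expr0 trmx1.
by rewrite exprSr exprS -IH; apply: trmx_mul.
Qed.

Lemma unit_rank x : (x \in unitmx) = (\rank x == n).
Proof. by rewrite -row_free_unit. Qed.

Lemma sing_rank x : (x \notin unitmx) = (\rank x < n)%N.
Proof. by rewrite unit_rank ltn_neqAle rank_leq_row andbT. Qed.
Lemma idem_conj e : e * e = e ->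
  exists R, R \is a GRing.unit /\ e = R^-1 * pid_mx (\rank e) * R.
Proof.
move=> ee.
set L := col_ebase e; set U := row_ebase e; set p : M := pid_mx (\rank e).
have he : L * p * U = e by exact: mulmx_ebase.
have Lu : L \is a GRing.unit by exact: col_ebase_unit.
have Uu : U \is a GRing.unit by exact: row_ebase_unit.
set f := U * L * p.
have pp : p * p = p by apply: pid_mx_id; apply: rank_leq_row.
have pf : p * f = p.
  apply: (mulrI Lu); apply: (mulIr Uu).
  by rewrite [RHS]he -ee -he /f !mulrA.
have fp : f * p = f by rewrite /f -mulrA pp.
have ff : f * f = f by rewrite {1}/f -mulrA pf.
set N := p - f.
have NN : N * N = 0.
  by rewrite /N mulrBl !mulrBr pp pf fp ff !subrr.
set Q := 1 + N.
have Qu : Q \is a GRing.unit.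
  apply/unitrP; exists (1 - N); split.
    by rewrite /Q mulrBl mul1r mulrDr mulr1 NN addr0 addrK.
  by rewrite /Q mulrDl mul1r mulrBr mulr1 NN subr0 subrK.
have Qf : Q * f = p * Q.
  by rewrite /Q mulrDl mulrDr mul1r mulr1 /N mulrBl pf ff addrC subrK mulrBr pp
    pf subrr addr0.
have Ue : U * e = f * U by rewrite -he /f !mulrA.
have Ru : Q * U \is a GRing.unit by rewrite unitrMr.
have : (Q * U) * e = p * (Q * U).
  by rewrite -mulrA Ue [Q * (f * U)]mulrA Qf -mulrA.
move=> h; exists (Q * U); split => //.
by rewrite -mulrA -h mulKr.
Qed.

Lemma pid_delta (a : nat) (i j : 'I_n) :
  pid_mx a * delta_mx i j = (if (i < a)%N then delta_mx i j else 0) :> M.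
Proof.
apply/matrixP=> k l; rewrite !mxE (bigD1 k) //= big1 => [|t tk]; last first.
  by rewrite !mxE; move: tk; rewrite -val_eqE eq_sym => /negbTE ->; rewrite mul0r.
rewrite !mxE eqxx /= addr0.
case: (eqVneq k i) => [->|ki] /=; first by case: ifP; rewrite ?mxE ?eqxx /= ?mul1r ?mul0r.
by rewrite mulr0; case: ifP; rewrite ?mxE ?(negbTE ki).
Qed.

Lemma delta_pid (a : nat) (i j : 'I_n) :
  delta_mx i j * pid_mx a = (if (j < a)%N then delta_mx i j else 0) :> M.
Proof.
apply/matrixP=> k l; rewrite !mxE (bigD1 j) //= big1 => [|t tj]; last first.
  by rewrite !mxE (negbTE tj) andbF mul0r.
rewrite !mxE eqxx andbT addr0.
case: (eqVneq j l) => [<-|jl] /=; first by case: ifP; rewrite ?mxE ?eqxx /= ?andbT ?mulr1 ?mulr0.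
have jl2 : (l == j) = false by rewrite eq_sym (negbTE jl).
move: jl; rewrite -val_eqE => /negbTE -> /=; rewrite mulr0; case: ifP; rewrite ?mxE // jl2 andbF //.
Qed.
Lemma pid_S (i : 'I_n) : pid_mx i.+1 = pid_mx i + delta_mx i i :> M.
Proof.
apply/matrixP=> k l; rewrite !mxE ltnS leq_eqVlt -!val_eqE /=.
case: (eqVneq (val k) (val l)) => [<-|ab] /=.
  case: (ltngtP k i) => h /=; rewrite ?addr0 ?add0r //.
rewrite add0r; case: eqP => // e; case: eqP => // e2.
by move: ab; rewrite /= e e2 eqxx.
Qed.

Lemma dd0 (i j k l : 'I_n) : j != k -> delta_mx i j * delta_mx k l = 0 :> M.
Proof. exact: mul_delta_mx_0. Qed.
Lemma dd (i j l : 'I_n) : delta_mx i j * delta_mx j l = delta_mx i l :> M.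
Proof. exact: mul_delta_mx. Qed.
Lemma ppid (i : 'I_n) : pid_mx i * pid_mx i = pid_mx i :> M.
Proof. by apply: pid_mx_id; apply: ltnW. Qed.

Lemma up T (i j : 'I_n) : closedT T -> isoT T -> (j : nat) = (i : nat).+1 ->
  pid_mx i \in T -> pid_mx j \in T.
Proof.
move=> cT iT hj pT.
have ij : i != j by rewrite -val_eqE /= hj neq_ltn ltnSn.
have ji : j != i by rewrite eq_sym.
have jlti : (j < i)%N = false by rewrite hj ltnNge leqnSn.
set p : M := pid_mx i.
have AT : p + delta_mx i j \in T.
  apply: (iT _ 2) => //; rewrite expr2 !mulrDl !mulrDr ppid pid_delta delta_pid.
  by rewrite ltnn jlti dd0 // !addr0.
have BT : p + delta_mx j i \in T.
  apply: (iT _ 2) => //; rewrite expr2 !mulrDl !mulrDr ppid pid_delta delta_pid.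
  by rewrite ltnn jlti dd0 // !addr0.
have := cT _ _ AT BT.
rewrite mulmxE !mulrDl !mulrDr ppid pid_delta delta_pid jlti dd.
by rewrite !addr0 add0r hj pid_S.
Qed.

Lemma down T (i k : 'I_n) : closedT T -> isoT T -> (i : nat) = (k : nat).+1 ->
  pid_mx i \in T -> pid_mx (i : nat).+1 \in T -> pid_mx k \in T.
Proof.
move=> cT iT hi pT p1T.
have ik : i != k by rewrite -val_eqE /= hi neq_ltn ltnSn orbT.
have ki : k != i by rewrite eq_sym.
have iltk : (i < k)%N = false by rewrite hi ltnNge leqnSn.
have kilt : (k < i)%N by rewrite hi ltnSn.
set q : M := pid_mx k.
have pi : pid_mx i = q + delta_mx k k :> M by rewrite hi pid_S.
have xT : q + delta_mx k i + delta_mx i k \in T.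
  apply: (iT _ 2) => //; rewrite expr2 !mulrDl !mulrDr ppid !pid_delta !delta_pid.
  rewrite ltnn iltk !dd !dd0 // !addr0 !add0r.
  by rewrite pid_S pi in p1T.
have yT := cT _ _ xT pT.
have ye : (q + delta_mx k i + delta_mx i k) * pid_mx i = q + delta_mx i k.
  rewrite !mulrDl delta_pid delta_pid ltnn kilt pi mulrDr ppid pid_delta ltnn.
  by rewrite !addr0.
rewrite mulmxE ye in yT.
have <- : (q + delta_mx i k) ^+ 2 = q.
  rewrite expr2 !mulrDl !mulrDr ppid pid_delta delta_pid.
  by rewrite ltnn iltk dd0 // !addr0.
exact: closed_pow.
Qed.

Lemma zero_of T r : closedT T -> isoT T -> (r < n)%N ->
  pid_mx r \in T -> pid_mx r.+1 \in T -> (0 : M) \in T.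
Proof.
move=> cT iT; elim: r => [|r IH] lt p0 p1; first by rewrite pid_mx_0 in p0.
apply: IH => //; first exact: ltnW.
have hi : nat_of_ord (inord r.+1 : 'I_n) = r.+1 by rewrite inordK.
have hk : nat_of_ord (inord r : 'I_n) = r by rewrite inordK // ltnW.
have := @down T (inord r.+1) (inord r) cT iT; rewrite hi hk; apply => //.
Qed.

Lemma zero2 T r : closedT T -> isoT T -> (r.+1 < n)%N ->
  pid_mx r \in T -> (0 : M) \in T.
Proof.
move=> cT iT lt p0; apply: (@zero_of T r) => //; first exact: ltnW.
have hi : nat_of_ord (inord r : 'I_n) = r by rewrite inordK // ltnW.
have hj : nat_of_ord (inord r.+1 : 'I_n) = r.+1 by rewrite inordK.
by have := @up T (inord r) (inord r.+1) cT iT; rewrite hi hj; apply.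
Qed.

Lemma upall T r : closedT T -> isoT T -> (0 : M) \in T -> (r < n)%N -> pid_mx r \in T.
Proof.
move=> cT iT z0; elim: r => [|r IH] lt; first by rewrite pid_mx_0.
have hi : nat_of_ord (inord r : 'I_n) = r by rewrite inordK // ltnW.
have hj : nat_of_ord (inord r.+1 : 'I_n) = r.+1 by rewrite inordK.
have := @up T (inord r) (inord r.+1) cT iT; rewrite hi hj; apply => //.
by apply: IH; apply: ltnW.
Qed.

Definition conjset T (R : M) := [set y | R^-1 * y * R \in T].

Lemma conj_pow (R y : M) k : R \is a GRing.unit ->
  (R^-1 * y * R) ^+ k = R^-1 * y ^+ k * R.
Proof.
move=> Ru; elim: k => [|k IH]; first by rewrite !expr0 mulr1 mulVr.
by rewrite exprS IH !mulrA mulrK // exprS !mulrA.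
Qed.

Lemma conj_closed T R : R \is a GRing.unit -> closedT T -> closedT (conjset T R).
Proof.
move=> Ru cT A B; rewrite !inE => hA hB.
have := cT _ _ hA hB; rewrite !mulmxE !mulrA mulrK //.
Qed.

Lemma conj_iso T R : R \is a GRing.unit -> isoT T -> isoT (conjset T R).
Proof.
move=> Ru iT x k k0; rewrite !inE -conj_pow //; exact: iT.
Qed.

Lemma conj_zero T R : ((0 : M) \in conjset T R) = ((0 : M) \in T).
Proof. by rewrite inE mulr0 mul0r. Qed.

Lemma C1 T e : closedT T -> isoT T -> e * e = e -> e \in T ->
  ((\rank e).+1 < n)%N -> (0 : M) \in T.
Proof.
move=> cT iT ee eT lt; have [R [Ru he]] := idem_conj ee.
rewrite -(conj_zero T R); apply: (@zero2 _ (\rank e)) => //.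
- exact: conj_closed. - exact: conj_iso.
by rewrite inE -he.
Qed.

Lemma C2 T e : closedT T -> isoT T -> (0 : M) \in T -> e * e = e ->
  (\rank e < n)%N -> e \in T.
Proof.
move=> cT iT z0 ee lt; have [R [Ru he]] := idem_conj ee.
have := @upall (conjset T R) (\rank e) (conj_closed Ru cT) (conj_iso Ru iT).
by rewrite conj_zero inE -he; apply.
Qed.

Lemma C3 T e : closedT T -> isoT T -> (1 : M) \in T -> e * e = e -> e \in T ->
  (\rank e < n)%N -> (0 : M) \in T.
Proof.
move=> cT iT o1 ee eT lt; have [R [Ru he]] := idem_conj ee.
rewrite -(conj_zero T R).
apply: (@zero_of _ (\rank e)) => //; first exact: conj_closed.
- exact: conj_iso.
- by rewrite inE -he.
case: (ltnP (\rank e).+1 n) => [lt2|ge].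
  apply: (@upall _ _ (conj_closed Ru cT) (conj_iso Ru iT)) => //.
  rewrite conj_zero; exact: (C1 cT iT ee eT lt2).
have -> : (\rank e).+1 = n by apply/eqP; rewrite eqn_leq lt ge.
by rewrite pid_mx_1 inE mulr1 mulVr.
Qed.

Lemma G1 T x : closedT T -> isoT T -> x \in T -> ((\rank x).+1 < n)%N -> (0 : M) \in T.
Proof.
move=> cT iT xT lt; have [k [k0 ee h]] := iso_idem x cT iT.
apply: (C1 cT iT ee); first by rewrite h.
by apply: leq_ltn_trans lt; rewrite ltnS; apply: rank_pow.
Qed.

Lemma G2 T x : closedT T -> isoT T -> (0 : M) \in T -> (\rank x < n)%N -> x \in T.
Proof.
move=> cT iT z0 lt; have [k [k0 ee h]] := iso_idem x cT iT.
rewrite -h; apply: (C2 cT iT z0 ee).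
by apply: leq_ltn_trans lt; apply: rank_pow.
Qed.

Lemma G3 T x : closedT T -> isoT T -> (1 : M) \in T -> x \in T -> (\rank x < n)%N ->
  (0 : M) \in T.
Proof.
move=> cT iT o1 xT lt; have [k [k0 ee h]] := iso_idem x cT iT.
apply: (C3 cT iT o1 ee); first by rewrite h.
by apply: leq_ltn_trans lt; apply: rank_pow.
Qed.

Lemma U1 T x : closedT T -> isoT T -> x \in T -> x \in unitmx -> (1 : M) \in T.
Proof.
move=> cT iT xT xu; have [k [k0 ee h]] := iso_idem x cT iT.
have eu : x ^+ k \is a GRing.unit by apply: unitrX.
have : x ^+ k * x ^+ k = x ^+ k * 1 by rewrite mulr1.
by move/(mulrI eu) => <-; rewrite h.
Qed.

Lemma U2 T x : closedT T -> isoT T -> (1 : M) \in T -> x \in unitmx -> x \in T.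
Proof.
move=> cT iT o1 xu; have [k [k0 ee h]] := iso_idem x cT iT.
have eu : x ^+ k \is a GRing.unit by apply: unitrX.
have : x ^+ k * x ^+ k = x ^+ k * 1 by rewrite mulr1.
by move/(mulrI eu) => e1; rewrite -h e1.
Qed.

Lemma cap0 (A B : M) : \rank B = 1%N -> ~~ (B <= A)%MS -> \rank (A :&: B)%MS = 0%N.
Proof.
move=> rB nBA; have [le eqC] := mxrank_leqif_eq (capmxSr A B).
rewrite rB in le eqC.
case: (ltnP (\rank (A :&: B)%MS) 1) => [|ge]; first by case: (\rank _).
have e1 : \rank (A :&: B)%MS = 1%N by apply/eqP; rewrite eqn_leq le ge.
move: eqC; rewrite e1 eqxx => /esym /andP [_ sB].
by move: nBA; rewrite (submx_trans sB (capmxSl A B)).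
Qed.

Lemma rk_tr (A : M) : \rank A^T = \rank A. Proof. exact: mxrank_tr. Qed.

Lemma prod_ker (A B : M) : \rank A = m -> \rank B = m -> ~~ (kermx A^T <= B^T)%MS ->
  (((A * B)^T == A^T)%MS && (kermx (A * B)^T == kermx B^T)%MS).
Proof.
move=> rA rB nK.
have rK : \rank (kermx A^T) = 1%N by rewrite mxrank_ker rk_tr rA subSnn.
have -> : (A * B)^T = B^T *m A^T by exact: trmx_mul.
have rP : \rank (B^T *m A^T) = m.
  have := mxrank_mul_ker B^T A^T; rewrite cap0 // addn0 rk_tr rB //.
apply/andP; split.
  by rewrite -(mxrank_leqif_eq (submxMl _ _)) rP rk_tr rA.
have sub : (kermx B^T <= kermx (B^T *m A^T))%MS.
  by apply/sub_kermxP; rewrite mulmxA mulmx_ker mul0mx.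
by rewrite andbC -(mxrank_leqif_eq sub) !mxrank_ker rP rk_tr rB.
Qed.

Lemma powS_sub (P : M) k : (0 < k)%N -> (P ^+ k <= P)%MS.
Proof. by case: k => // k _; rewrite exprSr; apply: submxMl. Qed.

Lemma ker_powS (P : M) k : (0 < k)%N -> (kermx P <= kermx (P ^+ k))%MS.
Proof.
case: k => // k _; rewrite exprS; apply/sub_kermxP.
by rewrite [_ * _]/(_ *m _) mulmxA mulmx_ker mul0mx.
Qed.

Lemma pow_back x k : (0 < k)%N -> \rank (x ^+ k) = m ->
  \rank x = m /\ (((x ^+ k)^T == x^T)%MS && (kermx (x ^+ k)^T == kermx x^T)%MS).
Proof.
move=> k0 rk.
have rx : \rank x = m.
  have := rank_pow x k0; rewrite rk => ge.
  have := rank_leq_row x; rewrite leq_eqVlt => /orP [/eqP ex|]; last first.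
    by move=> lt; apply/eqP; rewrite eqn_leq ge -ltnS lt.
  have xu : x \in unitmx by rewrite unit_rank ex.
  have : x ^+ k \in unitmx by apply: unitrX.
  by rewrite unit_rank rk => /eqP /n_Sn.
split => //; rewrite trmxX; apply/andP; split.
  by rewrite -(mxrank_leqif_eq (powS_sub _ k0)) -trmxX !rk_tr rk rx.
by rewrite andbC -(mxrank_leqif_eq (ker_powS _ k0)) !mxrank_ker -trmxX !rk_tr rk rx.
Qed.

Lemma pow_fwd x k : (0 < k)%N -> \rank x = m -> ~~ (kermx x^T <= x^T)%MS ->
  \rank (x ^+ k) = m.
Proof.
move=> + rx nK; elim: k => // [[|k]] IH _; first by rewrite expr1.
rewrite -rk_tr trmxX exprSr.
have := mxrank_mul_ker ((x^T) ^+ k.+1) x^T.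
have rK : \rank (kermx x^T) = 1%N by rewrite mxrank_ker rk_tr rx subSnn.
have c0 : \rank ((x^T) ^+ k.+1 :&: kermx x^T)%MS = 0%N.
  apply/eqP; rewrite -leqn0 -(cap0 rK nK).
  by apply: mxrankS; apply: capmxS => //; apply: powS_sub.
by rewrite c0 addn0 -trmxX rk_tr IH.
Qed.

Lemma idem_eq (E G : M) : E * E = E -> G * G = G -> (E <= G)%MS ->
  (kermx E <= kermx G)%MS -> E = G.
Proof.
move=> EE GG sEG sK.
have GG' : G *m G = G by exact: GG.
have EE' : E *m E = E by exact: EE.
have EG : E * G = E.
  case/submxP: sEG => D hD.
  have : E *m G = E by rewrite {1}hD -mulmxA GG' -hD.
  by [].
have K1 : ((1 - E) <= kermx E)%MS.
  have h : (1 - E) * E = 0 by rewrite mulrBl mul1r EE subrr.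
  by apply/sub_kermxP; exact: h.
have : (1 - E) * G = 0 by apply/sub_kermxP; exact: submx_trans K1 sK.
rewrite mulrBl mul1r EG => /eqP; rewrite subr_eq0 => /eqP <-.
by [].
Qed.

Lemma eqmx_tr (A B C : M) : (A == B)%MS -> (B == C)%MS -> (A == C)%MS.
Proof. by move=> /eqmxP e1 /eqmxP e2; apply/eqmxP; exact: (eqmx_trans e1 e2). Qed.

Lemma eqmx_symb (A B : M) : (A == B)%MS = (B == A)%MS.
Proof. by rewrite andbC. Qed.

Lemma S_ABP (calA calB : {set M}) A :
  reflect (exists V W, [/\ V \in calA, W \in calB, (A^T == V)%MS & (kermx A^T == W)%MS])
    (A \in S_AB calA calB).
Proof.
rewrite inE; apply: (iffP andP).
  case=> /existsP [V /andP [VA hV]] /existsP [W /andP [WB hW]].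
  by exists V, W; split.
case=> V [W [VA WB hV hW]]; split; apply/existsP.
  by exists V; rewrite VA.
by exists W; rewrite WB.
Qed.

Lemma suff_S (calA calB : {set M}) : calA != set0 -> calB != set0 ->
  (forall V, V \in calA -> \rank V = m) -> (forall W, W \in calB -> \rank W = 1%N) ->
  (forall W V, W \in calB -> V \in calA -> ~~ (W <= V)%MS) ->
  isolated_subsemigroup (S_AB calA calB).
Proof.
move=> nA nB rA rB dAB; split; [split|].
- case/set0Pn: nA => V VA; case/set0Pn: nB => W WB.
  have c0 : (V :&: W)%MS = 0.
    by apply/eqP; rewrite -mxrank_eq0 cap0 ?rB ?dAB.
  apply/set0Pn; exists (proj_mx V W)^T; apply/S_ABP; exists V, W; split => //;
    rewrite trmxK.
    have h1 : (proj_mx V W <= V)%MS.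
      by have := proj_mx_sub V W (1%:M : M); rewrite mul1mx.
    have h2 : (V <= proj_mx V W)%MS.
      by rewrite -[X in (X <= _)%MS](proj_mx_id c0 (submx_refl V)) submxMl.
    by rewrite h1 h2.
  have h3 : (W <= kermx (proj_mx V W))%MS.
    by apply/sub_kermxP; rewrite (proj_mx_0 c0 (submx_refl W)).
  have eVP : (V == proj_mx V W)%MS.
    rewrite (submx_trans (submx_refl V)) /=.
      by have := proj_mx_sub V W (1%:M : M); rewrite mul1mx.
    by rewrite -[X in (X <= _)%MS](proj_mx_id c0 (submx_refl V)) submxMl.
  by rewrite eqmx_symb -(mxrank_leqif_eq h3) mxrank_ker -(eqmx_rank eVP) (rA V VA)
    (rB W WB) subSnn.
- move=> A B /S_ABP [V1 [W1 [VA1 WB1 hV1 hW1]]] /S_ABP [V2 [W2 [VA2 WB2 hV2 hW2]]].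
  have rkA : \rank A = m by rewrite -rk_tr (eqmx_rank hV1) rA.
  have rkB : \rank B = m by rewrite -rk_tr (eqmx_rank hV2) rA.
  have nK : ~~ (kermx A^T <= B^T)%MS.
    by rewrite (eqmxP hW1) (eqmxP hV2) dAB.
  have /andP [e1 e2] := prod_ker rkA rkB nK.
  apply/S_ABP; exists V1, W2; split => //.
    exact: eqmx_tr e1 hV1.
  exact: eqmx_tr e2 hW2.
- move=> x k k0 /S_ABP [V [W [VA WB hV hW]]].
  have rk : \rank (x ^+ k) = m by rewrite -rk_tr (eqmx_rank hV) rA.
  have [_ /andP [e1 e2]] := pow_back k0 rk.
  apply/S_ABP; exists V, W; split => //.
    by apply: eqmx_tr hV; rewrite eqmx_symb.
  by apply: eqmx_tr hW; rewrite eqmx_symb.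
Qed.

Lemma nec T : (0 < m)%N -> isolated_subsemigroup T ->
  [\/ T = [set: M], T = GLset F n, T = I_rank_le F n m
    | exists calA calB : {set M},
        [/\ calA != set0 /\ calB != set0,
            (forall V, V \in calA -> \rank V = m),
            (forall W, W \in calB -> \rank W = 1%N),
            (forall W V, W \in calB -> V \in calA -> ~~ (W <= V)%MS)
          & T = S_AB calA calB]].
Proof.
move=> m0 [[Tn cT] iT].
have cT' : closedT T by [].
have iT' : isoT T by [].
case: (boolP ((0 : M) \in T)) => z0.
  case: (boolP [exists x in T, x \in unitmx]) => [/existsP [u /andP [uT uu]] | nu].
    have o1 := U1 cT' iT' uT uu.
    apply: Or41; apply/setP => x; rewrite inE.
    case: (boolP (x \in unitmx)) => xu; first exact: U2 cT' iT' o1 xu.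
    by apply: G2 cT' iT' z0 _; rewrite -sing_rank.
  apply: Or43; apply/setP => x; rewrite inE; apply/idP/idP => [xT|].
    have : x \notin unitmx.
      by apply/negP => xu; move/negP: nu; apply; apply/existsP; exists x; rewrite xT.
    by rewrite sing_rank.
  by move=> le; apply: G2 cT' iT' z0 _.
case: (boolP [exists x in T, x \in unitmx]) => [/existsP [u /andP [uT uu]] | nu].
  have o1 := U1 cT' iT' uT uu.
  apply: Or42; apply/setP => x; rewrite inE.
  apply/idP/idP => [xT|xu]; last exact: U2 cT' iT' o1 xu.
  apply/negPn/negP => xu; move/negP: z0; apply.
  by apply: G3 cT' iT' o1 xT _; rewrite -sing_rank.
have nuT : forall x, x \in T -> x \notin unitmx.
  by move=> x xT; apply/negP => xu; move/negP: nu; apply; apply/existsP; exists x; rewrite xT.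
have rT : forall x, x \in T -> \rank x = m.
  move=> x xT; have := nuT x xT; rewrite sing_rank ltnS => le.
  apply/eqP; rewrite eqn_leq le /=; rewrite leqNgt; apply/negP => lt.
  by move/negP: z0; apply; apply: G1 cT' iT' xT _; rewrite ltnS.
have D : forall x y, x \in T -> y \in T -> ~~ (kermx x^T <= y^T)%MS.
  move=> x y xT yT; apply/negP => sub.
  have xyT := cT _ _ xT yT.
  have := mxrank_mul_ker y^T x^T.
  rewrite (capmx_idPr sub) mxrank_ker !rk_tr (rT x xT) (rT y yT) subSnn -trmx_mul rk_tr => h.
  move/negP: z0; apply; apply: G1 cT' iT' xyT _.
  have e : (\rank (x *m y)).+1 = m by rewrite -addn1.
  by rewrite ltnS e.
apply: Or44; exists [set x^T | x in T], [set kermx x^T | x in T]; split.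
- case/set0Pn: Tn => x0 x0T; split; apply/set0Pn.
    by exists x0^T; apply: imset_f.
  by exists (kermx x0^T); apply: imset_f.
- by move=> V /imsetP [x xT ->]; rewrite rk_tr rT.
- by move=> W /imsetP [x xT ->]; rewrite mxrank_ker rk_tr rT // subSnn.
- by move=> W V /imsetP [x xT ->] /imsetP [y yT ->]; apply: D.
apply/setP => z; apply/idP/idP => [zT|].
  apply/S_ABP; exists z^T, (kermx z^T); split; rewrite ?submx_refl //; exact: imset_f.
case/S_ABP => V [W [/imsetP [x xT ->] /imsetP [y yT ->] hV hW]].
have wT := cT _ _ xT yT.
have /andP [e1 e2] := prod_ker (rT x xT) (rT y yT) (D x y xT yT).
set w := x * y in e1 e2.
have rz : \rank z = m by rewrite -rk_tr (eqmx_rank hV) rk_tr rT.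
have rw : \rank w = m by rewrite -rk_tr (eqmx_rank e1) rk_tr rT.
have nKz : ~~ (kermx z^T <= z^T)%MS by rewrite (eqmxP hW) (eqmxP hV) D.
have nKw : ~~ (kermx w^T <= w^T)%MS by rewrite (eqmxP e2) (eqmxP e1) D.
have [kz [kz0 zz hz]] := iso_idem z cT' iT'.
have [kw [kw0 ww hw]] := iso_idem w cT' iT'.
have [_ /andP [ez1 ez2]] := pow_back kz0 (pow_fwd kz0 rz nKz).
have [_ /andP [ew1 ew2]] := pow_back kw0 (pow_fwd kw0 rw nKw).
have EE : (z ^+ kz)^T * (z ^+ kz)^T = (z ^+ kz)^T.
  by rewrite -{3}zz; exact: esym (trmx_mul _ _).
have GG : (w ^+ kw)^T * (w ^+ kw)^T = (w ^+ kw)^T.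
  by rewrite -{3}ww; exact: esym (trmx_mul _ _).
have eq1 : ((z ^+ kz)^T == (w ^+ kw)^T)%MS.
  apply: eqmx_tr (eqmx_tr ez1 hV) _; rewrite eqmx_symb; exact: eqmx_tr ew1 e1.
have eq2 : (kermx (z ^+ kz)^T == kermx (w ^+ kw)^T)%MS.
  apply: eqmx_tr (eqmx_tr ez2 hW) _; rewrite eqmx_symb; exact: eqmx_tr ew2 e2.
have := idem_eq EE GG (andP eq1).1 (andP eq2).1.
move/trmx_inj => ezw; rewrite -hz ezw hw; exact: wT.
Qed.

End S.

Unset Implicit Arguments.

Theorem theorem28 (F : finFieldType) (n : nat) (hn : (2 <= n)%N) (T : {set 'M[F]_n}) :
  isolated_subsemigroup T <->
  [\/ T = [set: 'M[F]_n],
      T = GLset F n,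
      T = I_rank_le F n n.-1
    | exists calA calB : {set 'M[F]_n},
        [/\ calA != set0 /\ calB != set0,
            (forall V, V \in calA -> \rank V = n.-1),
            (forall W, W \in calB -> \rank W = 1%N),
            (forall W V, W \in calB -> V \in calA -> ~~ (W <= V)%MS)
          & T = S_AB calA calB]].
Proof.
case: n hn T => [|m] // hn T /=; split; first exact: nec.
case=> [->|->|->|[calA [calB [[nA nB] rA rB dAB ->]]]]; last exact: suff_S.
- split; [split|].
  + by apply/set0Pn; exists 0; rewrite inE.
  + by move=> *; rewrite inE.
  + by move=> x *; exact: in_setT.
- split; [split|].
  + by apply/set0Pn; exists 1%:M; rewrite inE unitmx1.
  + by move=> A B; rewrite !inE unitmx_mul => -> ->.
  + move=> x k k0; rewrite !inE => h.
    have : x ^+ k \is a GRing.unit by exact: h.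
    by rewrite unitrX_pos.
- split; [split|].
  + by apply/set0Pn; exists 0; rewrite inE mxrank0.
  + move=> A B; rewrite !inE => hA _; exact: leq_trans (mxrankM_maxl _ _) hA.
  + move=> x k k0; rewrite !inE => h.
    rewrite -ltnS -sing_rank; apply/negP => xu.
    have : x ^+ k \in unitmx by apply: unitrX.
    by rewrite unit_rank => /eqP e; move: h; rewrite e ltnn.
Qed.
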